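(* The space $X$ decomposes (mod 0) into the disjoint union of two $G$-invariant measurable sets $$X=\big[\mathcal C\cup(\mathcal D\setminus\mathcal D_{\mathrm{free}})\big]\sqcup\mathcal D_{\mathrm{free}}$$ such that the restriction of the action to $\mathcal C\cup(\mathcal D\setminus\mathcal D_{\mathrm{free}})$ is conservative and the restriction of the action to $\mathcal D_{\mathrm{free}}$ is completely dissipative.
   Context: Standing setup: $(X,m)$ is a Lebesgue probability space (a probability space whose non-atomic part is isomorphic to an interval with Lebesgue measure, plus at most countably many atoms), and $G$ is an infinite countable group acting on $X$ by invertible measurable transformations preserving the measure class of $m$; everything is mod 0. The ergodic components are the fibers (with conditional measures) of the quotient by the $\sigma$-algebra of $G$-invariant sets; each is either purely atomic (a single $G$-orbit) or purely non-atomic. The continual part $\mathcal C$ is the union of purely non-atomic components, the discontinual part $\mathcal D=X\setminus\mathcal C$ the union of purely atomic ones; $\mathcal D_{\mathrm{free}}$ is the union of the orbits in $\mathcal D$ whose points have trivial stabilizers. A measurable set $A$ is recurrent if for a.e. $x\in A$ there is $g\neq e$ with $gx\in A$; it is wandering if the translates $gA$, $g\in G$, are pairwise disjoint. The action restricted to a $G$-invariant measurable set $Y$ is conservative if every measurable subset of $Y$ is recurrent, and completely dissipative if $Y=\bigcup_{g\in G}gA$ (mod 0) for some wandering set $A$. *)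

(* Defs.v *)
From HB Require Import structures.
From mathcomp Require Import all_boot all_order all_algebra.
From mathcomp Require Import all_classical all_reals all_analysis.
From mathcomp Require Import measurable_realfun.

Set Implicit Arguments.
Unset Strict Implicit.
Unset Printing Implicit Defensive.

Import Order.TTheory GRing.Theory Num.Theory.
Local Open Scope classical_set_scope.
Local Open Scope ring_scope.
Local Open Scope ereal_scope.

Definition group_axioms (G : Type) (mul : G -> G -> G) (one : G)
    (inv : G -> G) : Prop :=
  (forall a b c, mul a (mul b c) = mul (mul a b) c) /\
  (forall a, mul one a = a) /\
  (forall a, mul (inv a) a = one).

Definition infinite_countable_group (G : Type) (mul : G -> G -> G) (one : G)
    (inv : G -> G) : Prop :=
  group_axioms mul one inv /\ countable [set: G] /\ infinite_set [set: G].

Section Mod0.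
Context {d : measure_display} {X : measurableType d} {R : realType}.
Variable m : probability X R.

Definition eq_mod0 (A B : set X) : Prop :=
  exists N, [/\ measurable N, m N = 0 & forall x, ~ N x -> (A x <-> B x)].

Definition is_atom (mu : set X -> \bar R) (A : set X) : Prop :=
  [/\ measurable A, 0 < mu A &
      forall B, measurable B -> B `<=` A -> mu B = 0 \/ mu B = mu A].

Definition nonatomic (mu : set X -> \bar R) : Prop :=
  forall A, ~ is_atom mu A.
End Mod0.

(* Lebesgue probability space: countably many atoms (points of        *)
(* positive mass) plus a non-atomic part isomorphic mod 0 to an       *)
(* interval [0,s[ with Lebesgue measure.                              *)
Definition lebesgue_probability_space {d : measure_display}
    {X : measurableType d} {R : realType} (m : probability X R) : Prop :=
  exists (X0 S : set X) (phi : X -> R),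
    let Y := X0 `\` S in
    let s := fine (m Y) in
    [/\ measurable X0 /\ m (~` X0) = 0,
        countable S /\ S `<=` X0 /\
        (forall a, S a -> measurable [set a] /\ 0 < m [set a]),
        {in Y &, injective phi} /\ phi @` Y `<=` `[0%R, s[,
        (exists Z : set R, [/\ measurable Z, Z `<=` phi @` Y &
            lebesgue_measure (`[0%R, s[ `\` Z) = 0]) &
        (forall B : set R, measurable B ->
            measurable (Y `&` phi @^-1` B) /\
            m (Y `&` phi @^-1` B) = lebesgue_measure (B `&` `[0%R, s[)) /\
        (forall A, measurable A -> A `<=` Y ->
            exists B : set R, measurable B /\ eq_mod0 m A (Y `&` phi @^-1` B))].

Section Actions.
Context {d : measure_display} {X : measurableType d} {R : realType}.
Variable m : probability X R.
Variables (G : Type) (mul : G -> G -> G) (one : G) (inv : G -> G).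
Variable act : G -> X -> X.

Definition quasi_invariant (mu : set X -> \bar R) : Prop :=
  forall g A, measurable A -> (mu A = 0 <-> mu (act g @^-1` A) = 0).

Definition nonsingular_action : Prop :=
  [/\ (forall x, act one x = x),
      (forall g h x, act (mul g h) x = act g (act h x)),
      (forall g, measurable_fun setT (act g)) &
      quasi_invariant m].

Definition invariant_set (B : set X) : Prop :=
  measurable B /\ forall g, act g @^-1` B = B.

Definition ergodic_measure (mu : set X -> \bar R) : Prop :=
  forall B, invariant_set B -> mu B = 0 \/ mu B = 1.

(* Ergodic decomposition: x |-> mu x is the conditional measure (the
   ergodic component containing x) of m with respect to the sigma-algebra
   of G-invariant sets, i.e. the fibers with conditional measures of the
   quotient by that sigma-algebra. *)
Definition ergodic_decomposition (mu : X -> probability X R) : Prop :=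
  [/\ (forall A, measurable A ->
         measurable_fun [set: X] (fun x : X => (mu x A : \bar R))),
      (forall A, measurable A -> forall g x, mu (act g x) A = mu x A),
      (forall A B, measurable A -> invariant_set B ->
          m (A `&` B) = \int[m]_(x in B) mu x A) &
      (exists N, [/\ measurable N, m N = 0 &
          forall x, ~ N x -> ergodic_measure (mu x) /\ quasi_invariant (mu x)])].

Definition continual_part (mu : X -> probability X R) : set X :=
  [set x | nonatomic (mu x)].

Definition discontinual_part (mu : X -> probability X R) : set X :=
  ~` continual_part mu.

Definition discontinual_free_part (mu : X -> probability X R) : set X :=
  [set x | discontinual_part mu x /\ forall g, act g x = x -> g = one].

Definition recurrent (A : set X) : Prop :=
  exists N, [/\ measurable N, m N = 0 &
    forall x, A x -> ~ N x -> exists g, g <> one /\ A (act g x)].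

Definition wandering (A : set X) : Prop :=
  forall g h, g <> h -> (act g @` A) `&` (act h @` A) = set0.

Definition conservative_on (Y : set X) : Prop :=
  forall A, measurable A -> A `<=` Y -> recurrent A.

Definition completely_dissipative_on (Y : set X) : Prop :=
  exists A, [/\ measurable A, wandering A &
    eq_mod0 m Y (\bigcup_(g in [set: G]) (act g @` A))].
End Actions.

(* Main.v *)
Require Import Defs.
From HB Require Import structures.
From mathcomp Require Import all_boot all_order all_algebra.
From mathcomp Require Import all_classical all_reals all_analysis.
From mathcomp Require Import measurable_realfun.
Set Implicit Arguments.
Unset Strict Implicit.
Unset Printing Implicit Defensive.
Import Order.TTheory GRing.Theory Num.Theory.
Local Open Scope classical_set_scope.
Local Open Scope ereal_scope.

Section Gen.
Context {d : measure_display} {X : measurableType d} {R : realType}.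

Lemma mfa_nat (Q : nat -> Prop) (B : nat -> set X) :
  (forall i, Q i -> measurable (B i)) -> measurable [set x | forall i, Q i -> B i x].
Proof.
move=> mB.
have -> : [set x | forall i, Q i -> B i x] =
   \bigcap_i (if pselect (Q i) is left _ then B i else setT).
  apply/seteqP; split => x /=.
    by move=> H i _; case: pselect => // /H.
  move=> H i Qi; have := H i I; by case: pselect.
apply: bigcapT_measurable => i; case: pselect => // /mB //.
Qed.

Lemma mex_nat (Q : nat -> Prop) (B : nat -> set X) :
  (forall i, Q i -> measurable (B i)) -> measurable [set x | exists i, Q i /\ B i x].
Proof.
move=> mB.
have -> : [set x | exists i, Q i /\ B i x] =
   \bigcup_i (if pselect (Q i) is left _ then B i else set0).
  apply/seteqP; split => x /=.
    by move=> [i [Qi Bi]]; exists i => //; case: pselect.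
  by move=> [i _]; case: pselect => // Qi Bi; exists i.
apply: bigcupT_measurable => i; case: pselect => // /mB //.
Qed.

Lemma neg_nat (mu : measure X R) (A : nat -> set X) :
  (forall i, mu.-negligible (A i)) -> mu.-negligible (\bigcup_i A i).
Proof. exact: negligible_bigcup. Qed.

Lemma neg_count (T : countType) (mu : measure X R) (A : T -> set X) :
  (forall i, mu.-negligible (A i)) -> mu.-negligible [set x | exists i, A i x].
Proof.
move=> nA.
have /negligible_bigcup : forall n, mu.-negligible
   (if choice.unpickle n is Some t then A t else set0).
  by move=> n; case: choice.unpickle => // ; exact: negligible_set0.
apply: negligibleS => x [t At]; exists (choice.pickle t) => //.
by rewrite choice.pickleK.
Qed.

Lemma neg_type (G : Type) (cG : countable [set: G]) (mu : measure X R)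
   (A : G -> set X) :
  (forall i, mu.-negligible (A i)) -> mu.-negligible [set x | exists i, A i x].
Proof.
move=> nA; have /countable_injP [f finj] := cG.
have /negligible_bigcup : forall n, mu.-negligible [set x | exists g, f g = n /\ A g x].
  move=> n; have [[g fg]|ng] := pselect (exists g, f g = n).
    apply: negligibleS (nA g) => x [g' [fg' Ag']].
    have <- // : g' = g by apply: finj; rewrite ?inE // fg fg'.
  by apply: negligibleS (negligible_set0 mu) => x [g [fg _]]; apply: ng; exists g.
by apply: negligibleS => x [g Ag]; exists (f g) => //; exists g.
Qed.

Lemma mex_type (G : Type) (cG : countable [set: G]) (Q : G -> Prop) (A : G -> set X) :
  (forall i, Q i -> measurable (A i)) -> measurable [set x | exists i, Q i /\ A i x].
Proof.
move=> mA; have /countable_injP [f finj] := cG.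
have -> : [set x | exists i, Q i /\ A i x] =
   \bigcup_n [set x | exists g, f g = n /\ Q g /\ A g x].
  apply/seteqP; split => x /=.
    by move=> [g [Qg Ag]]; exists (f g) => //; exists g.
  by move=> [n _ [g [_ h]]]; exists g.
apply: bigcupT_measurable => n.
have [[g [fg Qg]]|ng] := pselect (exists g, f g = n /\ Q g).
  have -> : [set x | exists g, f g = n /\ Q g /\ A g x] = A g.
    apply/seteqP; split => x /=.
      move=> [g' [fg' [_ Ag']]].
      have <- // : g' = g by apply: finj; rewrite ?inE // fg fg'.
    by move=> Ag; exists g.
  exact: mA.
have -> : [set x | exists g, f g = n /\ Q g /\ A g x] = set0.
  by apply/seteqP; split => x //= [g [fg [Qg _]]]; apply: ng; exists g.
exact: measurable0.
Qed.

Lemma mfa_type (G : Type) (cG : countable [set: G]) (Q : G -> Prop) (A : G -> set X) :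
  (forall i, Q i -> measurable (A i)) -> measurable [set x | forall i, Q i -> A i x].
Proof.
move=> mA.
have -> : [set x | forall i, Q i -> A i x] = ~` [set x | exists i, Q i /\ (~` A i) x].
  apply/seteqP; split => x /=.
    by move=> H [i [Qi nA]]; apply: nA; apply: H.
  move=> H i Qi; apply: contrapT => nA; apply: H; by exists i.
apply: measurableC; apply: mex_type => // i Qi; apply: measurableC; exact: mA.
Qed.

Lemma mfun_case (B : set X) (g1 g2 : X -> \bar R) :
  measurable B -> measurable_fun setT g1 -> measurable_fun setT g2 ->
  measurable_fun setT (fun x => if pselect (B x) is left _ then g1 x else g2 x).
Proof.
move=> mB m1 m2 _ V mV; rewrite setTI.
have -> : (fun x => if pselect (B x) is left _ then g1 x else g2 x) @^-1` V =
   (B `&` (g1 @^-1` V)) `|` (~` B `&` (g2 @^-1` V)).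
  apply/seteqP; split => x /=; case: pselect => Bx.
  - by left.
  - by right.
  - by case => [[]|[]].
  - by case => [[]|[]].
apply: measurableU; apply: measurableI => //; first (rewrite -(setTI (_ @^-1` _)); exact: m1).
  exact: measurableC.
rewrite -(setTI (_ @^-1` _)); exact: m2.
Qed.

End Gen.

Section Main.
Context {d : measure_display} {X : measurableType d} {R : realType}.
Variable m : probability X R.
Variables (G : Type) (mul : G -> G -> G) (one : G) (inv : G -> G).
Variable act : G -> X -> X.
Variable mu : X -> probability X R.
Hypothesis Hgrp : group_axioms mul one inv.
Hypothesis cG : countable [set: G].
Hypothesis Hact : nonsingular_action m mul one act.
Hypothesis Herg : ergodic_decomposition m act mu.

Lemma mulA a b c : mul a (mul b c) = mul (mul a b) c.
Proof. by case: Hgrp. Qed.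
Lemma mul1g a : mul one a = a.
Proof. by case: Hgrp => _ []. Qed.
Lemma mulVg a : mul (inv a) a = one.
Proof. by case: Hgrp => _ []. Qed.
Lemma mulgV a : mul a (inv a) = one.
Proof.
rewrite -[X in X = _](mul1g) -[X in mul X _](mulVg (inv a)).
by rewrite -mulA [mul (inv a) _]mulA mulVg mul1g mulVg.
Qed.
Lemma mulg1 a : mul a one = a.
Proof. by rewrite -(mulVg a) mulA mulgV mul1g. Qed.
Lemma inv_neq1 g : g <> one -> inv g <> one.
Proof. by move=> g1 ig1; apply: g1; rewrite -(mul1g g) -ig1 mulVg. Qed.
Lemma mul_neq1 g h : g <> h -> mul (inv h) g <> one.
Proof.
move=> gh e; apply: gh.
by rewrite -(mul1g g) -(mulgV h) -mulA e mulg1.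
Qed.

Lemma act1 x : act one x = x.
Proof. by case: Hact. Qed.
Lemma actM g h x : act (mul g h) x = act g (act h x).
Proof. by case: Hact => _ H. Qed.
Lemma actK g x : act (inv g) (act g x) = x.
Proof. by rewrite -actM mulVg act1. Qed.
Lemma actKV g x : act g (act (inv g) x) = x.
Proof. by rewrite -actM mulgV act1. Qed.
Lemma act_inj g : injective (act g).
Proof. by move=> x y e; rewrite -(actK g x) e actK. Qed.
Lemma mact g A : measurable A -> measurable (act g @^-1` A).
Proof. by move=> mA; case: Hact => _ _ H _; rewrite -[_ @^-1` _]setTI; exact: H. Qed.
Lemma imgE g A : act g @` A = act (inv g) @^-1` A.
Proof.
apply/seteqP; split => x /=.
  by move=> [y Ay <-]; rewrite actK.
by move=> Ax; exists (act (inv g) x) => //; rewrite actKV.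
Qed.
Lemma mimg g A : measurable A -> measurable (act g @` A).
Proof. by move=> mA; rewrite imgE; exact: mact. Qed.
Lemma qim g A : measurable A -> (m A = 0 <-> m (act g @^-1` A) = 0).
Proof. by case: Hact => _ _ _ H; exact: H. Qed.

Definition AE (P : X -> Prop) := m.-negligible (~` [set x | P x]).

Lemma AE_mono (P Q : X -> Prop) : (forall x, P x -> Q x) -> AE P -> AE Q.
Proof. by move=> PQ; apply: negligibleS => x /= nQ Px; apply: nQ; exact: PQ. Qed.

Lemma AE_and (P Q : X -> Prop) : AE P -> AE Q -> AE (fun x => P x /\ Q x).
Proof.
move=> hP hQ; apply: negligibleS (negligibleU hP hQ) => x /= nPQ.
by have [Px|Px] := pselect (P x); [right => Qx; apply: nPQ|left].
Qed.

Lemma AE_count (T : countType) (P : T -> X -> Prop) :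
  (forall t, AE (P t)) -> AE (fun x => forall t, P t x).
Proof.
move=> hP; apply: negligibleS (neg_count hP) => x /= nP.
by apply: contrapT => H; apply: nP => t; apply: contrapT => nPt; apply: H; exists t.
Qed.

Lemma AE_G (P : G -> X -> Prop) :
  (forall t, AE (P t)) -> AE (fun x => forall t, P t x).
Proof.
move=> hP; apply: negligibleS (neg_type cG hP) => x /= nP.
by apply: contrapT => H; apply: nP => t; apply: contrapT => nPt; apply: H; exists t.
Qed.

Lemma AE_act g (P : X -> Prop) : AE P -> AE (fun x => P (act g x)).
Proof.
move=> [B [mB B0 sB]]; exists (act g @^-1` B); split.
- exact: mact.
- exact: (proj1 (qim g mB) B0).
- by move=> x /= nP; apply: sB.
Qed.

Lemma AE_orbit (P : X -> Prop) : AE P -> AE (fun x => forall g, P (act g x)).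
Proof. by move=> hP; apply: AE_G => g; exact: AE_act. Qed.

Lemma AE_null (P : X -> Prop) : AE P ->
  exists N, [/\ measurable N, m N = 0 & forall x, ~ N x -> P x].
Proof.
move=> [B [mB B0 sB]]; exists B; split => // x nB.
by apply: contrapT => nP; apply: nB; apply: sB.
Qed.


Lemma mu_meas A : measurable A -> measurable_fun setT (fun x => mu x A).
Proof. by case: Herg => H _ _ _; exact: H. Qed.
Lemma mu_inv g x A : measurable A -> mu (act g x) A = mu x A.
Proof. by case: Herg => _ H _ _ mA; exact: H. Qed.
Lemma mu_int A B : measurable A -> invariant_set act B ->
  m (A `&` B) = \int[m]_(x in B) mu x A.
Proof. by case: Herg => _ _ H _; exact: H. Qed.
Lemma mu_erg : AE (fun x => ergodic_measure act (mu x) /\ quasi_invariant act (mu x)).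
Proof.
case: Herg => _ _ _ [N [mN N0 HN]]; exists N; split => // x /= H.
by apply: contrapT => nN; apply: H; exact: HN.
Qed.

Lemma int0_AE (D : set X) (f : X -> \bar R) : measurable D ->
  measurable_fun setT f -> (forall x, 0 <= f x) ->
  \int[m]_(x in D) f x = 0 -> AE (fun x => D x -> f x = 0).
Proof.
move=> mD mf f0 i0.
have mfD : measurable_fun D f by exact: measurable_funS mf.
have := (ae_eq_integral_abs m mD mfD).1.
rewrite (_ : \int[m]_(x in D) `|f x| = \int[m]_(x in D) f x); last first.
  by apply: eq_integral => x _; rewrite gee0_abs.
by move=> /(_ i0).
Qed.

Lemma inv_setT : invariant_set act setT.
Proof. by split => // g. Qed.
Lemma inv_setC B : invariant_set act B -> invariant_set act (~` B).
Proof. move=> [mB HB]; split; [exact: measurableC| move=> g].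
move: (HB g) => /seteqP [h1 h2].
apply/seteqP; split => x /= Hx Bx; apply: Hx.
  exact: h2.
exact: h1.
Qed.

Lemma CE B : invariant_set act B ->
  AE (fun x => (B x -> mu x B = 1) /\ (~ B x -> mu x B = 0)).
Proof.
move=> iB; have mB := iB.1.
have h1 : AE (fun x => B x -> mu x (~` B) = 0).
  apply: int0_AE => //; first exact: mu_meas (measurableC mB).
  by rewrite -mu_int ?setICl ?measure0 //; exact: measurableC.
have h2 : AE (fun x => ~ B x -> mu x B = 0).
  apply: int0_AE; [exact: measurableC|exact: mu_meas|by []|].
  by rewrite -mu_int ?setICr ?measure0 //; exact: inv_setC.
apply: AE_mono (AE_and h1 h2) => x [H1 H2]; split => // Bx.
have := probability_setC (mu x) (measurableC mB).
by rewrite setCK (H1 Bx) sube0.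
Qed.

Lemma AE_null_mu N : measurable N -> m N = 0 -> AE (fun x => mu x N = 0).
Proof.
move=> mN N0; apply: AE_mono (int0_AE measurableT (mu_meas mN) (fun _ => measure_ge0 _ _) _).
  by move=> x /(_ I).
by rewrite -mu_int ?setIT //; exact: inv_setT.
Qed.


Variables (X0 : set X) (F : nat -> set X).
Hypothesis mX0 : measurable X0.
Hypothesis nX0 : m (~` X0) = 0.
Hypothesis mF : forall n, measurable (F n).
Hypothesis sepF : forall x y, X0 x -> X0 y -> (forall n, F n x <-> F n y) -> x = y.

Definition cell k x := [set z | X0 z /\ forall n, (n < k)%N -> (F n z <-> F n x)].
Definition cellS (s : seq bool) :=
  [set z | X0 z /\ forall n, (n < size s)%N -> (F n z <-> nth false s n)].
Definition pat k x := mkseq (fun n => `[< F n x >]) k.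
Definition rho x := mu x (\bigcap_k cell k x).

Lemma cell_pat k x : cell k x = cellS (pat k x).
Proof.
rewrite /cellS /pat; apply/seteqP; split => z /= [Xz H]; split => // n.
  by rewrite size_mkseq => nk; rewrite nth_mkseq // asboolE; exact: H.
move=> nk; have := H n; rewrite size_mkseq nth_mkseq // asboolE; exact.
Qed.

Lemma m_iff n (P : Prop) : measurable [set z | F n z <-> P].
Proof.
have [p|np] := pselect P.
  by rewrite (_ : [set z | _] = F n) //; apply/seteqP; split => z /=; tauto.
rewrite (_ : [set z | _] = ~` F n); first exact: measurableC.
by apply/seteqP; split => z /=; tauto.
Qed.

Lemma m_cellS s : measurable (cellS s).
Proof.
apply: measurableI => //; apply: mfa_nat => i _; exact: m_iff.
Qed.

Lemma m_cell k x : measurable (cell k x).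
Proof. by rewrite cell_pat; exact: m_cellS. Qed.

Lemma cell0 x : cell 0 x = X0.
Proof. by apply/seteqP; split => z /= => [[]//|Xz]; split. Qed.

Lemma cellS_ind k x : cell k.+1 x = cell k x `&` [set z | F k z <-> F k x].
Proof.
apply/seteqP; split => z /=.
  move=> [Xz H]; split; last exact: H.
  by split => // n nk; apply: H; exact: ltnW.
move=> [[Xz H] Hk]; split => // n; rewrite ltnS leq_eqVlt => /orP [/eqP ->//|]; exact: H.
Qed.

Lemma cell_dec x : nonincreasing_seq (cell ^~ x).
Proof.
apply/nonincreasing_seqP => k; rewrite cellS_ind; apply/subsetPset; exact: subIsetl.
Qed.

Lemma cell_cap x : X0 x -> \bigcap_k cell k x = [set x].
Proof.
move=> Xx; apply/seteqP; split => z /=.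
  move=> H; have [Xz _] := H 0%N I; apply: sepF => // n.
  by have [_ /(_ n (ltnSn n))] := H n.+1 I.
by move=> -> k _; split.
Qed.

Lemma m_single x : X0 x -> measurable [set x].
Proof. by move=> Xx; rewrite -cell_cap //; apply: bigcapT_measurable => k; exact: m_cell. Qed.

Lemma mf_cell k A : measurable A -> measurable_fun setT (fun x => mu x (A `&` cell k x)).
Proof.
elim: k A => [|k IH] A mA.
  under eq_fun do rewrite cell0; exact: mu_meas (measurableI _ _ mA mX0).
rewrite (_ : (fun x => _) = (fun x => if pselect (F k x) is left _
   then mu x ((A `&` F k) `&` cell k x) else mu x ((A `&` ~` F k) `&` cell k x))).
  apply: mfun_case => //; apply: IH; apply: measurableI => //; exact: measurableC.
apply/funext => x; case: pselect => Fx; congr (mu x _); rewrite cellS_ind;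
  apply/seteqP; split => z /=; tauto.
Qed.

Lemma rho_cvg x : (fun k => mu x (cell k x)) @ \oo --> rho x.
Proof.
rewrite /rho.
have := @nonincreasing_cvg_mu _ X R (mu x) (fun k => cell k x).
apply.
- by apply: (le_lt_trans (probability_le1 _ (m_cell 0 x))); exact: ltey.
- by move=> k; exact: m_cell.
- by apply: bigcapT_measurable => k; exact: m_cell.
- exact: cell_dec.
Qed.

Lemma mrho : measurable_fun setT rho.
Proof.
apply: (@emeasurable_fun_cvg _ X R setT (fun k x => mu x (setT `&` cell k x))).
  by move=> k; exact: mf_cell.
by move=> x _; under eq_fun do rewrite setTI; exact: rho_cvg.
Qed.

Lemma rhoE x : X0 x -> rho x = mu x [set x].
Proof. by move=> Xx; rewrite /rho cell_cap. Qed.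


Lemma cell_cvg x y : (fun k => mu x (cell k y)) @ \oo --> mu x (\bigcap_k cell k y).
Proof.
have := @nonincreasing_cvg_mu _ X R (mu x) (fun k => cell k y).
apply.
- by apply: (le_lt_trans (probability_le1 _ (m_cell 0 y))); exact: ltey.
- by move=> k; exact: m_cell.
- by apply: bigcapT_measurable => k; exact: m_cell.
- exact: cell_dec.
Qed.

Lemma atom_point x : mu x (~` X0) = 0 -> ~ nonatomic (mu x) ->
  exists y, X0 y /\ 0 < mu x [set y].
Proof.
move=> nX0x nat.
have [A [mA A0 HA]] : exists A, is_atom (mu x) A.
  by apply: contrapT => H; apply: nat => A HA; apply: H; exists A.
pose sg n := mu x (A `&` F n) = mu x A.
pose T := A `&` [set z | X0 z /\ forall n, True -> (F n z <-> sg n)].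
have mT : measurable T.
  apply: measurableI => //; apply: measurableI => //; apply: mfa_nat => n _; exact: m_iff.
have nB : forall n, (mu x).-negligible (A `&` [set z | ~ (F n z <-> sg n)]).
  move=> n; have [s|ns] := pselect (sg n).
    exists (A `\` F n); split; first exact: measurableD.
      have Afin : mu x A < +oo.
        by apply: (le_lt_trans (probability_le1 _ mA)); exact: ltey.
      have s' : mu x (A `&` F n) = mu x A := s.
      rewrite measureD //; set b := (X in _ - X); have -> : b = mu x A by exact: s'.
      by rewrite subee // ge0_fin_numE.
    by move=> z /= [Az H]; split => //; tauto.
  exists (A `&` F n); split; first exact: measurableI.
    by case: (HA (A `&` F n) (measurableI _ _ mA (mF n)) (@subIsetl _ _ _)).
  move=> z /= [Az H]; split => //; apply: contrapT => nF; apply: H.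
  by split => [Fz|sz]; [case: (nF Fz)|case: (ns sz)].
have nN : (mu x).-negligible (~` X0 `|` \bigcup_n (A `&` [set z | ~ (F n z <-> sg n)])).
  apply: negligibleU; first by exists (~` X0); split => //; exact: measurableC.
  exact: negligible_bigcup.
have [N [mN N0 sN]] := nN.
have AT : A `<=` T `|` N.
  move=> z Az; have [Tz|nTz] := pselect (T z); first by left.
  right; apply: sN; have [Xz|nXz] := pselect (X0 z); last by left.
  right; apply: contrapT => H; apply: nTz; split => //; split => // n _.
  by apply: contrapT => nn; apply: H; exists n.
have T0 : 0 < mu x T.
  rewrite -(measureU0 (mu := mu x) mT mN N0); apply: (lt_le_trans A0).
  by apply: le_measure => //; rewrite inE //; exact: measurableU.
have [y Ty] : T !=set0.
  by apply/set0P/negP => /eqP T0'; move: T0; rewrite T0' measure0 ltxx.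
have Xy : X0 y by case: Ty => _ [].
exists y; split => //; apply: (lt_le_trans T0); apply: le_measure; rewrite ?inE //.
  exact: m_single.
move=> z Tz; apply: sepF => //; first by case: Tz => _ [].
move=> n; case: Tz => _ [_ Hz]; case: Ty => _ [_ Hy].
by rewrite (propext (Hz n I)) (propext (Hy n I)).
Qed.


Definition Bq (t : seq bool * rat) := [set z | mu z (cellS t.1) < (ratr t.2)%:E].

Lemma inv_Bq t : invariant_set act (Bq t).
Proof.
split.
  rewrite -[Bq t]setTI; apply: measurable_lte => //; first exact: mu_meas (m_cellS _).
by move=> g; apply/seteqP; split => z /=; rewrite /Bq /= mu_inv //; exact: m_cellS.
Qed.

Definition CLprop x := forall t, (Bq t x -> mu x (Bq t) = 1) /\ (~ Bq t x -> mu x (Bq t) = 0).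

Lemma CLae : AE CLprop.
Proof. by apply: AE_count => t; apply: CE; exact: inv_Bq. Qed.

Lemma fin_mu x A : measurable A -> mu x A \is a fin_num.
Proof.
move=> mA; rewrite ge0_fin_numE //; apply: (le_lt_trans (probability_le1 _ mA)); exact: ltey.
Qed.

Lemma CL_eq x y : CLprop x -> X0 y -> 0 < mu x [set y] ->
  forall s, mu y (cellS s) = mu x (cellS s).
Proof.
move=> Hx Xy y0 s; apply: contrapT => neq.
have mc := m_cellS s; have my := m_single Xy.
have fa := fin_mu y mc; have fb := fin_mu x mc.
have [ab|ba] : mu y (cellS s) < mu x (cellS s) \/ mu x (cellS s) < mu y (cellS s).
  by have /orP := lt_total (introN eqP neq); case; [left|right].
- move: ab; rewrite -(fineK fa) -(fineK fb) lte_fin => /rat_in_itvoo [q].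
  rewrite in_itv /= => /andP [h1 h2].
  have [_ H] := Hx (s, q).
  have nB : ~ Bq (s, q) x.
    by rewrite /Bq /= -(fineK fb) lte_fin => /(lt_trans h2); rewrite ltxx.
  have B0 := H nB.
  have : mu x [set y] <= mu x (Bq (s, q)).
    apply: le_measure; rewrite ?inE //; first exact: (inv_Bq (s, q)).1.
    by move=> z -> /=; rewrite /Bq /= -(fineK fa) lte_fin.
  by rewrite B0 => /(lt_le_trans y0); rewrite ltxx.
- move: ba; rewrite -(fineK fa) -(fineK fb) lte_fin => /rat_in_itvoo [q].
  rewrite in_itv /= => /andP [h1 h2].
  have [H _] := Hx (s, q).
  have B1 : mu x (Bq (s, q)) = 1.
    by apply: H; rewrite /Bq /= -(fineK fb) lte_fin.
  have mB := (inv_Bq (s, q)).1.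
  have : mu x [set y] <= mu x (~` Bq (s, q)).
    apply: le_measure; rewrite ?inE //; first exact: measurableC.
    by move=> z -> /=; rewrite /Bq /= -(fineK fa) lte_fin => /(lt_trans h2); rewrite ltxx.
  by rewrite probability_setC // B1 subee // => /(lt_le_trans y0); rewrite ltxx.
Qed.

Lemma CL_rho x y : CLprop x -> X0 y -> 0 < mu x [set y] -> rho y = mu x [set y].
Proof.
move=> Hx Xy y0.
have e : (fun k => mu y (cell k y)) = (fun k => mu x (cell k y)).
  by apply/funext => k; rewrite cell_pat; exact: CL_eq.
have h1 := rho_cvg (x:=y); rewrite e in h1.
have h2 := cell_cvg (x:=x) (y:=y); rewrite cell_cap // in h2.
exact: (cvg_unique _ h1 h2).
Qed.


Definition sat (A : set X) := \bigcup_(g in [set: G]) (act g @` A).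

Lemma satP A x : sat A x <-> exists g a, A a /\ x = act g a.
Proof.
split; first by move=> [g _ [a Aa <-]]; exists g, a.
by move=> [g [a [Aa ->]]]; exists g => //; exists a.
Qed.

Lemma sat_self A x : A x -> sat A x.
Proof. by move=> Ax; apply/satP; exists one, x; rewrite act1. Qed.

Lemma m_sat A : measurable A -> measurable (sat A).
Proof.
move=> mA; rewrite (_ : sat A = [set x | exists g, True /\ (act g @` A) x]).
  by apply: mex_type => // g _; exact: mimg.
by apply/seteqP; split => x /=; [move=> [g _ h]; exists g|move=> [g [_ h]]; exists g].
Qed.

Lemma inv_sat A : measurable A -> invariant_set act (sat A).
Proof.
move=> mA; split; first exact: m_sat.
move=> h; apply/seteqP; split => x /=.
  move=> /satP [g [a [Aa e]]]; apply/satP; exists (mul (inv h) g), a; split => //.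
  by rewrite actM -e actK.
move=> /satP [g [a [Aa ->]]]; apply/satP; exists (mul h g), a; split => //.
by rewrite actM.
Qed.

Lemma mex_nat' (B : nat -> set X) :
  (forall i, measurable (B i)) -> measurable [set x | exists i, B i x].
Proof.
move=> mB; rewrite (_ : [set x | _] = [set x | exists i, True /\ B i x]).
  by apply: mex_nat => i _; exact: mB.
by apply/seteqP; split => x /=; [move=> [i h]; exists i|move=> [i [_ h]]; exists i].
Qed.

Definition CEp B x := (B x -> mu x B = 1) /\ (~ B x -> mu x B = 0).

Definition P := [set x | X0 x /\ 0 < rho x].
Definition Free := [set x | forall g, g <> one -> exists n, ~ (F n (act g x) <-> F n x)].
Definition ltF y x := exists n, (forall i, (i < n)%N -> (F i y <-> F i x)) /\ F n x /\ ~ F n y.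
Definition prec y x := rho y < rho x \/ (rho y = rho x /\ ltF y x).
Definition W := [set x | P x /\ Free x /\ forall g, g <> one -> prec (act g x) x].

Lemma m_iffact g n : measurable [set x | F n (act g x) <-> F n x].
Proof.
rewrite (_ : [set x | _] = (act g @^-1` F n `&` F n) `|` (~` (act g @^-1` F n) `&` ~` F n)).
  apply: measurableU; apply: measurableI => //; try apply: measurableC => //; exact: mact.
by apply/seteqP; split => x /=; [move=> [h1 h2]; have [Fx|nFx] := pselect (F n x);
  [left; split => //; exact: h2|right; split => // /h1]|case=> [[]|[]]; tauto].
Qed.

Lemma m_P : measurable P.
Proof.
rewrite (_ : P = X0 `&` (setT `&` [set x | (fun _ => 0) x < rho x])) //.
  apply: measurableI => //; apply: measurable_lte => //; exact: mrho.
by rewrite setTI.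
Qed.

Lemma m_Free : measurable Free.
Proof.
apply: mfa_type => // g _; apply: mex_nat' => n; apply: measurableC; exact: m_iffact.
Qed.

Lemma m_prec g : measurable [set x | prec (act g x) x].
Proof.
have mf : measurable_fun setT (rho \o act g).
  apply: measurableT_comp; first exact: mrho.
  by case: Hact.
have ml : measurable [set x | rho (act g x) < rho x].
  by rewrite -[X in measurable X]setTI; exact: measurable_lte mf mrho.
have mg : measurable [set x | rho x < rho (act g x)].
  by rewrite -[X in measurable X]setTI; exact: measurable_lte mrho mf.
have me : measurable [set x | rho (act g x) = rho x].
  rewrite (_ : [set x | _] = ~` ([set x | rho (act g x) < rho x] `|` [set x | rho x < rho (act g x)])).
    exact/measurableC/measurableU.
  apply/seteqP; split => x /=.
    by move=> ->; rewrite ltxx; case.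
  move=> H; apply/eqP; rewrite eq_le !leNgt; apply/andP; split; apply/negP => h; apply: H;
    by [right|left].
have mF' : measurable [set x | ltF (act g x) x].
  apply: mex_nat' => n; apply: measurableI; first by apply: mfa_nat => i _; exact: m_iffact.
  apply: measurableI => //; apply: measurableC; exact: mact.
rewrite (_ : [set x | _] = [set x | rho (act g x) < rho x] `|`
   ([set x | rho (act g x) = rho x] `&` [set x | ltF (act g x) x])) //.
apply: measurableU => //; exact: measurableI.
Qed.

Lemma m_W : measurable W.
Proof.
apply: measurableI; first exact: m_P.
apply: measurableI; first exact: m_Free.
apply: mfa_type => // g _; exact: m_prec.
Qed.


Lemma ltF_irr a : ~ ltF a a.
Proof. by move=> [n [_ [Fa nFa]]]. Qed.

Lemma ltF_trans a b c : ltF a b -> ltF b c -> ltF a c.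
Proof.
move=> [n [Hn [Fnb nFna]]] [k [Hk [Fkc nFkb]]].
case: (ltngtP n k) => nk.
- exists n; split; last split => //.
    move=> i ni; rewrite (propext (Hn i ni)); apply: Hk; exact: ltn_trans ni nk.
  by apply/(Hk n nk).
- exists k; split; last split => //.
    move=> i ki; rewrite (propext (Hn i (ltn_trans ki nk))); exact: Hk.
  by rewrite (propext (Hn k nk)).
- by subst k.
Qed.

Lemma ltF_total a b : X0 a -> X0 b -> a <> b -> ltF a b \/ ltF b a.
Proof.
move=> Xa Xb ab.
have ex : exists n, `[< ~ (F n a <-> F n b) >].
  apply: contrapT => H; apply: ab; apply: sepF => // n; apply: contrapT => nn.
  by apply: H; exists n; apply/asboolP.
case: (ex_minnP ex) => n /asboolP Hn Hmin.
have pre : forall i, (i < n)%N -> (F i a <-> F i b).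
  move=> i ni; apply: contrapT => nn.
  by have := Hmin i (asboolT nn); rewrite leqNgt ni.
have [Fa|nFa] := pselect (F n a).
  right; exists n; split; last split => //.
    by move=> i ni; apply: iff_sym; exact: pre.
  by move=> Fb; apply: Hn.
left; exists n; split; first exact: pre.
split => //; apply: contrapT => nFb; apply: Hn; split => [/nFa|/nFb] //.
Qed.

Lemma prec_irr a : ~ prec a a.
Proof. by case; [rewrite ltxx|move=> [_ /ltF_irr]]. Qed.

Lemma prec_le a b : prec a b -> rho a <= rho b.
Proof. by case => [/ltW|[-> _]]. Qed.

Lemma prec_trans a b c : prec a b -> prec b c -> prec a c.
Proof.
case => [ab|[ab lab]]; case => [bc|[bc lbc]].
- by left; exact: lt_trans ab bc.
- by left; rewrite -bc.
- by left; rewrite ab.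
- by right; split; [rewrite ab|exact: ltF_trans lab lbc].
Qed.

Lemma prec_total a b : X0 a -> X0 b -> a <> b -> prec a b \/ prec b a.
Proof.
move=> Xa Xb ab; case: (ltgtP (rho a) (rho b)) => h.
- by left; left.
- by right; left.
- by case: (ltF_total Xa Xb ab) => l; [left|right]; right.
Qed.

Lemma rho_orb x g : (forall h, X0 (act h x)) -> rho (act g x) = mu x [set act g x].
Proof. by move=> H; rewrite rhoE // mu_inv //; exact: m_single. Qed.

Lemma rho_le1 x : rho x <= 1.
Proof. apply: probability_le1; apply: bigcapT_measurable => k; exact: m_cell. Qed.

Lemma rho_ge0 x : 0 <= rho x.
Proof. exact: measure_ge0. Qed.

Lemma max_orbit x : (forall g, X0 (act g x)) -> 0 < rho x ->
  exists g0, forall h, act h (act g0 x) <> act g0 x -> prec (act h (act g0 x)) (act g0 x).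
Proof.
move=> Xo r0; apply: contrapT => H.
have step : forall g0, exists g1, prec (act g0 x) (act g1 x).
  move=> g0; apply: contrapT => H1; apply: H; exists g0 => h hn.
  have nd : act (mul h g0) x <> act g0 x by rewrite actM.
  case: (prec_total (Xo (mul h g0)) (Xo g0) nd); first by rewrite actM.
  by move=> p; exfalso; apply: H1; exists (mul h g0).
have [nx Hn] := choice step.
pose y n := act (iter n nx one) x.
have y0 : y 0%N = x by rewrite /y /= act1.
have ch : forall i j, (i < j)%N -> prec (y i) (y j).
  move=> i; elim => // j IH; rewrite ltnS leq_eqVlt => /orP [/eqP ->|ij].
    exact: Hn.
  exact: prec_trans (IH ij) (Hn _).
have rge : forall n, rho x <= rho (y n).
  by case => [|n]; [rewrite y0|rewrite -{1}y0; apply: prec_le; exact: ch].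
have dis : forall i j, (i < j)%N -> y i <> y j.
  by move=> i j ij e; have := ch i j ij; rewrite e => /prec_irr.
pose U n := [set z | exists i, (i < n)%N /\ [set y i] z].
have mU : forall n, measurable (U n).
  move=> n; apply: mex_nat => i _; apply: m_single; exact: Xo.
have rfin : rho x \is a fin_num.
  by rewrite ge0_fin_numE //; apply: (le_lt_trans (rho_le1 x)); exact: ltey.
pose r := fine (rho x).
have rE : rho x = r%:E by rewrite /r fineK.
have bound : forall n, (n%:R * r)%:E <= mu x (U n).
  elim => [|n IH]; first by rewrite mul0r measure_ge0.
  have -> : U n.+1 = U n `|` [set y n].
    apply/seteqP; split => z /=.
      move=> [i []]; rewrite ltnS leq_eqVlt => /orP [/eqP -> ->|in0 zi]; first by right.
      by left; exists i.
    by case => [[i [ni ->]]|->]; [exists i; split => //; exact: ltnW|exists n].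
  rewrite measureU //; last 2 first.
  - apply: m_single; exact: Xo.
  - apply/seteqP; split => z // [[i [ni ->]] e]; exact: (dis i n ni e).
  rewrite -addn1 natrD mulrDl mul1r EFinD; apply: leeD => //.
  by have := rge n; rewrite rE /y (rho_orb _ Xo).
have r0' : (0 < r)%R by rewrite -lte_fin -rE.
have [n h] : exists n : nat, (r^-1 < n%:R)%R by exists (Num.truncn r^-1).+1; exact: truncnS_gt.
have : (n%:R * r)%:E <= 1.
  apply: le_trans (bound n) _; exact: probability_le1.
rewrite lee_fin; apply/negP; rewrite -ltNge.
by move: h; rewrite -(ltr_pM2r r0') mulVf // gt_eqF.
Qed.


Lemma conj_one g h : mul (inv g) (mul h g) = one -> h = one.
Proof.
move=> E; have e : mul h g = g.
  by rewrite -[RHS]mulg1 -E mulA mulgV mul1g.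
by rewrite -[h]mulg1 -(mulgV g) mulA e mulgV.
Qed.

Lemma stab_conj g h x : act h (act g x) = act g x -> act (mul (inv g) (mul h g)) x = x.
Proof. by move=> e; rewrite !actM e actK. Qed.

Lemma QP x a h : quasi_invariant act (mu x) -> X0 a -> X0 (act h a) ->
  0 < mu x [set act h a] -> 0 < mu x [set a].
Proof.
move=> qi Xa Xha; rewrite !lt0e !measure_ge0 !andbT => /eqP ne; apply/eqP => z; apply: ne.
apply/(qi h _ (m_single Xha)).
have -> : act h @^-1` [set act h a] = [set a].
  by apply/seteqP; split => u /=; [move/act_inj|move=> ->].
exact: z.
Qed.

Lemma QP' x a h : quasi_invariant act (mu x) -> X0 a -> X0 (act h a) ->
  0 < mu x [set a] -> 0 < mu x [set act h a].
Proof.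
move=> qi Xa Xha; have := QP (a := act h a) (h := inv h) qi Xha; rewrite actK; exact.
Qed.

Lemma SW x : (forall g, X0 (act g x)) -> quasi_invariant act (mu x) -> 0 < rho x ->
  (forall h, act h x = x -> h = one) -> sat W x.
Proof.
move=> Xo qi r0 stab.
have Xx : X0 x by have := Xo one; rewrite act1.
have [g0 Hmax] := max_orbit Xo r0.
set w := act g0 x.
have stabw : forall h, act h w = w -> h = one.
  by move=> h /stab_conj /stab /conj_one.
have Xw : X0 w := Xo g0.
have Xhw : forall h, X0 (act h w) by move=> h; rewrite /w -actM.
have Ww : W w.
  split; first split => //.
    rewrite (rho_orb _ Xo); apply: QP' => //; by rewrite -rhoE.
  split.
    move=> h h1; apply: contrapT => H; apply: h1; apply: stabw; apply: sepF => // n.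
    by apply: contrapT => nn; apply: H; exists n.
  move=> h h1; apply: Hmax => e; apply: h1; exact: stabw.
by apply/satP; exists (inv g0), w; split => //; rewrite /w actK.
Qed.

Definition Good x := [/\ forall g, X0 (act g x), quasi_invariant act (mu x),
  mu x (~` X0) = 0, CLprop x & CEp (sat P) x].

Lemma AE_Good : AE Good.
Proof.
have h1 : AE (fun x => forall g, X0 (act g x)).
  apply: AE_orbit; exists (~` X0); split => //; exact: measurableC.
have h2 := AE_and h1 (AE_and mu_erg (AE_and (AE_null_mu (measurableC mX0) nX0)
   (AE_and CLae (CE (inv_sat m_P))))).
by apply: AE_mono h2 => x [a [[_ b] [c [e f]]]]; split.
Qed.

Lemma Y2_Dfree x : sat W x -> discontinual_free_part one act mu x.
Proof.
move=> /satP [g [w [[[Xw rw] [Fw _]] ->]]]; split.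
  move=> na; apply: (na [set w]); split.
  - exact: m_single.
  - have := rw; rewrite rhoE // => h; rewrite mu_inv; [exact: h|exact: m_single].
  - move=> B mB sB; have [Bw|nBw] := pselect (B w).
      by right; congr (_ _); apply/seteqP; split => // z ->.
    left; rewrite (_ : B = set0) ?measure0 //; apply/seteqP; split => z // Bz.
    by apply: nBw; rewrite -(sB z Bz).
move=> h /stab_conj e; apply: (conj_one (g := g)); apply: contrapT => k1.
have [n nn] := Fw _ k1; apply: nn; by rewrite e.
Qed.

Lemma Dfree_Y2 x : Good x -> discontinual_free_part one act mu x -> sat W x.
Proof.
move=> [Xo qi nX0x CLx CEx] [Dx stab].
have [y [Xy y0]] := atom_point nX0x Dx.
have ry := CL_rho CLx Xy y0.
have Py : P y by split => //; rewrite ry.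
have satPx : sat P x.
  apply: contrapT => ns; have := CEx.2 ns => z.
  have : mu x [set y] <= mu x (sat P).
    apply: le_measure; rewrite ?inE //; [exact: m_single|exact: m_sat m_P|].
    by move=> u ->; exact: sat_self.
  by rewrite z => /(lt_le_trans y0); rewrite ltxx.
move/satP: satPx => [g [p [[Xp rp] xE]]].
have Xx : X0 x by have := Xo one; rewrite act1.
apply: SW => //; rewrite rhoE //.
have pE : p = act (inv g) x by rewrite xE actK.
rewrite rhoE // pE mu_inv in rp; last by rewrite -pE; exact: m_single.
have := QP' (a := act (inv g) x) (h := g) qi; rewrite actKV; apply => //.
Qed.


Lemma qi_tr x g : quasi_invariant act (mu x) -> quasi_invariant act (mu (act g x)).
Proof. by move=> qi h B mB; rewrite !mu_inv //; [exact: qi|exact: mact]. Qed.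

Lemma muC x B : measurable B -> mu x B = 1 -> mu x (~` B) = 0.
Proof. by move=> mB h; rewrite probability_setC // h subee. Qed.

Lemma cons A : measurable A -> A `<=` ~` sat W -> recurrent m one act A.
Proof.
move=> mA AW.
pose E := [set x | A x /\ forall g, g <> one -> ~ A (act g x)].
have mE : measurable E.
  apply: measurableI => //; apply: mfa_type => // g _; apply: measurableC; exact: mact.
have uniq : forall e e' g h, E e -> E e' -> act g e = act h e' -> e = e'.
  move=> e e' g h Ee Ee' eq; have [gh|gh] := pselect (g = h).
    by subst h; exact: act_inj eq.
  exfalso; have := Ee.2 _ (mul_neq1 gh); rewrite actM eq actK; apply; exact: Ee'.1.
have key : AE (fun x => mu x E = 0).
  have hs : AE (fun x => forall s : seq bool, CEp (sat (E `&` cellS s)) x).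
    apply: AE_count => s; apply: CE; apply: inv_sat; apply: measurableI => //; exact: m_cellS.
  apply: AE_mono (AE_and AE_Good (AE_and (CE (inv_sat mE)) hs)).
  move=> x [[Xo qi _ _ _] [CEE CEs]].
  apply: contrapT => ne.
  have pos : 0 < mu x E by rewrite lt0e measure_ge0 andbT; exact/eqP.
  have sE : sat E x.
    apply: contrapT => ns; have z := CEE.2 ns.
    have : mu x E <= mu x (sat E).
      apply: le_measure; rewrite ?inE //; first exact: m_sat.
      by move=> u; exact: sat_self.
    by rewrite z => /(lt_le_trans pos); rewrite ltxx.
  move/satP: sE => [g0 [e0 [Ee0 xE]]].
  have e0E : e0 = act (inv g0) x by rewrite xE actK.
  have Xe0 : X0 e0 by rewrite e0E.
  have Xoe : forall h, X0 (act h e0) by move=> h; rewrite e0E -actM.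
  pose O := [set z | exists g, z = act g e0].
  have nO : (mu x).-negligible (~` O).
    have : (mu x).-negligible (\bigcup_k ~` sat (E `&` cell k e0)).
      apply: negligible_bigcup => k; exists (~` sat (E `&` cell k e0)); split => //.
        apply/measurableC/m_sat/measurableI => //; exact: m_cell.
      have mS : measurable (sat (E `&` cell k e0)).
        by apply/m_sat/measurableI => //; exact: m_cell.
      apply: muC => //; have := (CEs (pat k e0)).1; rewrite -cell_pat; apply.
      by apply/satP; exists g0, e0; split => //; split => //; split.
    apply: negligibleS => z nOz; apply: contrapT => H.
    have Hk : forall k, sat (E `&` cell k e0) z.
      by move=> k; apply: contrapT => nk; apply: H; exists k.
    have [g' [e' [[Ee' _] ze']]] := (satP _ _).1 (Hk 0%N).
    have ce : forall k, cell k e0 e'.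
      move=> k; have [gk [ek [[Eek cek] zek]]] := (satP _ _).1 (Hk k).
      have ek_e : ek = e'.
        apply: (uniq ek e' gk g' Eek Ee'); by rewrite -zek -ze'.
      by rewrite -ek_e.
    have ee : e' = e0.
      have : (\bigcap_k cell k e0) e' by move=> k _; exact: ce.
      by rewrite cell_cap.
    apply: nOz; exists g'; by rewrite ze' ee.
  have [g1 pos1] : exists g, 0 < mu x [set act g e0].
    apply: contrapT => H.
    have : (mu x).-negligible (O `|` ~` O).
      apply: negligibleU => //.
      have : (mu x).-negligible [set z | exists g, [set act g e0] z].
        apply: neg_type => // g; exists [set act g e0]; split => //.
          exact: m_single.
        apply/eqP; rewrite eq_le measure_ge0 andbT leNgt; apply/negP => p.
        by apply: H; exists g.
      by apply: negligibleS => z [g ->]; exists g.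
    rewrite setUv => -[B [mB B0 sB]].
    have : mu x [set: X] <= mu x B by apply: le_measure; rewrite ?inE.
    by rewrite probability_setT B0 lee_fin ler10.
  have pe0 : 0 < mu x [set e0] := QP qi Xe0 (Xoe g1) pos1.
  have me : mu e0 [set e0] = mu x [set e0].
    by rewrite {1}e0E mu_inv //; exact: m_single.
  have re0 : 0 < rho e0 by rewrite rhoE // me.
  have stab : forall h, act h e0 = e0 -> h = one.
    move=> h he; apply: contrapT => h1; apply: (Ee0.2 h h1); rewrite he; exact: Ee0.1.
  have qie : quasi_invariant act (mu e0) by rewrite e0E; exact: qi_tr.
  have := SW Xoe qie re0 stab; exact: (AW _ Ee0.1).
have mE0 : m E = 0.
  rewrite -(setIT E) mu_int //.
  rewrite (@ae_eq_integral _ _ _ m setT (cst 0)) //; first exact: integral0.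
  - exact: mu_meas.
  -
    by apply: AE_mono key => x h _.
exists E; split => // x Ax nE; apply: contrapT => H; apply: nE; split => // g g1 Ag.
by apply: H; exists g.
Qed.


Lemma wand_W : wandering act W.
Proof.
move=> g h gh; apply/seteqP; split => z // [[w Ww <-] [w' Ww' e]].
have k1 := mul_neq1 gh.
have e1 : act (mul (inv h) g) w = w' by rewrite actM -e actK.
have p1 := Ww.2.2 _ k1; rewrite e1 in p1.
have e2 : act (inv (mul (inv h) g)) w' = w by rewrite -e1 actK.
have p2 := Ww'.2.2 _ (inv_neq1 k1); rewrite e2 in p2.
by have := prec_trans p1 p2; move/prec_irr.
Qed.

Lemma main_part : exists Y1 Y2 : set X,
    [/\ invariant_set act Y1 /\ invariant_set act Y2,
        Y1 `&` Y2 = set0 /\ eq_mod0 m (Y1 `|` Y2) setT,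
        eq_mod0 m Y1 (continual_part mu `|` (discontinual_part mu `\`
           discontinual_free_part one act mu)) /\
        eq_mod0 m Y2 (discontinual_free_part one act mu),
        conservative_on m one act Y1 &
        completely_dissipative_on m act Y2].
Proof.
have iY2 := inv_sat m_W.
have [N [mN N0 HN]] := AE_null AE_Good.
have eqv : forall x, ~ N x -> (sat W x <-> discontinual_free_part one act mu x).
  move=> x nN; split; first exact: Y2_Dfree.
  exact: Dfree_Y2 (HN x nN).
exists (~` sat W), (sat W); split.
- by split => //; exact: inv_setC.
- split; first exact: setICl.
  by exists set0; split => // x _; rewrite setvU.
- split; last by exists N; split => // x nN; exact: eqv.
  exists N; split => // x nN.
  have e := eqv x nN; rewrite /continual_part /discontinual_part /=.
  split.
    move=> nW; have [c|nc] := pselect (nonatomic (mu x)); first by left.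
    by right; split => // /e.
  by case => [c /e [D _]|[_ nD] /e].
- by move=> A mA sA; exact: cons.
- exists W; split => //; first exact: m_W.
    exact: wand_W.
  by exists set0; split.
Qed.

End Main.

Lemma sep_family {d : measure_display} {X : measurableType d} {R : realType}
  (m : probability X R) : lebesgue_probability_space m ->
  exists (X0 : set X) (F : nat -> set X), [/\ measurable X0, m (~` X0) = 0,
    (forall n, measurable (F n)) &
    forall x y, X0 x -> X0 y -> (forall n, F n x <-> F n y) -> x = y].
Proof.
move=> [X0 [S [phi]]] /=.
move=> [[mX0 nX0] [cS [SX0 Sa]] [phiinj _] _ [Hphi _]].
have /countable_injP [f finj] := cS.
pose Y := X0 `\` S.
pose Fi (t : (rat + nat)%type) : set X :=
  match t with
  | inl q => Y `&` phi @^-1` [set u | (u < ratr q)%R]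
  | inr k => [set a | S a /\ f a = k]
  end.
have mFi : forall t, measurable (Fi t).
  case => [q|k] /=.
    have mq : measurable [set u : R | (u < ratr q)%R].
      rewrite (_ : [set u | _] = `]-oo, ratr q[%classic).
        exact: measurable_itv.
      by apply/seteqP; split => u /=; rewrite in_itv /=.
    exact: (Hphi _ mq).1.
  have [[a [Sa' fa]]|na] := pselect (exists a, S a /\ f a = k).
    rewrite (_ : [set a | _] = [set a]); first exact: (Sa a Sa').1.
    apply/seteqP; split => z /=; last by move=> ->.
    move=> [Sz fz]; apply: finj; rewrite ?inE //; by rewrite fz fa.
  rewrite (_ : [set a | _] = set0) //; apply/seteqP; split => z //= [Sz fz].
  by apply: na; exists z.
pose F n := if choice.unpickle n is Some t then Fi t else set0.
exists X0, F; split => //.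
  by move=> n; rewrite /F; case: choice.unpickle.
move=> x y Xx Xy H.
have Ht : forall t, Fi t x <-> Fi t y.
  by move=> t; have := H (choice.pickle t); rewrite /F choice.pickleK.
have [Sx|nSx] := pselect (S x).
  have := (Ht (inr (f x))).1 (conj Sx erefl) => -[Sy fy].
  by apply: finj; rewrite ?inE.
have [Sy|nSy] := pselect (S y).
  have := (Ht (inr (f y))).2 (conj Sy erefl) => -[Sx' _]; by [].
have Yx : Y x by [].
have Yy : Y y by [].
apply: phiinj; rewrite ?inE //.
case: (ltgtP (phi x) (phi y)) => // h.
- have [q] := rat_in_itvoo h; rewrite in_itv /= => /andP [h1 h2].
  have := (Ht (inl q)).1 (conj Yx h1) => -[_ /=].
  by move=> /(lt_trans h2); rewrite ltxx.
- have [q] := rat_in_itvoo h; rewrite in_itv /= => /andP [h1 h2].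
  have := (Ht (inl q)).2 (conj Yy h1) => -[_ /=].
  by move=> /(lt_trans h2); rewrite ltxx.
Qed.

Theorem mainTheorem6 (d : measure_display) (X : measurableType d)
  (R : realType) (m : probability X R)
  (G : Type) (mul : G -> G -> G) (one : G) (inv : G -> G)
  (act : G -> X -> X) (mu : X -> probability X R) :
  lebesgue_probability_space m ->
  infinite_countable_group mul one inv ->
  nonsingular_action m mul one act ->
  ergodic_decomposition m act mu ->
  let C := continual_part mu in
  let D := discontinual_part mu in
  let Dfree := discontinual_free_part one act mu in
  exists Y1 Y2 : set X,
    [/\ invariant_set act Y1 /\ invariant_set act Y2,
        Y1 `&` Y2 = set0 /\ eq_mod0 m (Y1 `|` Y2) setT,
        eq_mod0 m Y1 (C `|` (D `\` Dfree)) /\ eq_mod0 m Y2 Dfree,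
        conservative_on m one act Y1 &
        completely_dissipative_on m act Y2].
Proof.
move=> Hleb [Hgrp [cG _]] Hact Herg C D Dfree.
have [X0 [F [mX0 nX0 mF sepF]]] := sep_family Hleb.
exact: (main_part Hgrp cG Hact Herg mX0 nX0 mF sepF).
Qed.
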